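(* Let $\varepsilon,\delta\ge0$, $\alpha\ge0$, $p\in[0,1]$. Suppose $\mathcal M$ is an $(\varepsilon,\delta)$-DP mechanism for offline prefix-sum estimation on inputs $s\in\mathbb R^n$ that outputs $(a^1,\dots,a^n)$ with $\max_{k\in[n]}|a^k-\sum_{i=1}^k s_i|\le\alpha$ with probability at least $p$. Then the mechanism that, given a frequency vector $f\in\mathbb N^n$, sorts $f$ in non-increasing order to obtain $s$ and outputs $\mathcal M(s)$ is $(\varepsilon,\delta)$-DP for static $\textsc{TopK}$, and with probability at least $p$ its output satisfies $|a^k-\|f\|_{\mathrm{top}\text{-}k}|\le\alpha$ for all $k\in[n]$.
   Context: Offline prefix-sum estimation: input $s=(s_1,\dots,s_n)\in\mathbb R^n$, output estimates $a^k$ of $\sum_{i\le k}s_i$ for all $k\in[n]$; inputs $s,s'$ are neighboring if $\|s-s'\|_1\le1$. Static $\textsc{TopK}$: input a frequency vector $f\in\mathbb N^n$ (of a set of updates given up front); output estimates of $\|f\|_{\mathrm{top}\text{-}k}=\sum_{i=1}^kf_{\sigma(i)}$ for all $k\in[n]$, where $\sigma$ sorts $f$ in non-increasing order; two frequency vectors are neighboring if they agree in all coordinates except one, where they differ by exactly $1$. $(\varepsilon,\delta)$-DP: $\Pr[\mathcal A(x)\in S]\le e^\varepsilon\Pr[\mathcal A(y)\in S]+\delta$ for neighbors $x,y$ and all output sets $S$. *)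

(* Defs.v *)
From HB Require Import structures.
From mathcomp Require Import all_boot all_order all_algebra all_fingroup.
From mathcomp Require Import all_classical all_reals all_analysis.
Set Implicit Arguments. Unset Strict Implicit. Unset Printing Implicit Defensive.
Import Order.TTheory GRing.Theory Num.Theory.
Local Open Scope ring_scope.
Local Open Scope classical_set_scope.

(* A randomized mechanism with inputs in X and outputs in R^n (n-tuples of
   reals, with the product Borel sigma-algebra) is a map from inputs to
   probability distributions on outputs. *)
Definition mechanism (R : realType) (X : Type) (n : nat) :=
  X -> probability (n.-tuple R) R.

Definition DP (R : realType) (X : Type) (n : nat) (nbr : X -> X -> Prop)
    (M : mechanism R X n) (eps delta : R) : Prop :=
  forall x y, nbr x y -> forall S : set (n.-tuple R), measurable S ->
    (M x S <= (expR eps)%:E * M y S + delta%:E)%E.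

Definition prefix_nbr (R : realType) (n : nat) (s s' : n.-tuple R) : Prop :=
  \sum_(i < n) `|tnth s i - tnth s' i| <= 1.

Definition freq_nbr (n : nat) (f f' : n.-tuple nat) : Prop :=
  exists j : 'I_n, (forall i : 'I_n, i != j -> tnth f i = tnth f' i) /\
    (tnth f j = (tnth f' j).+1 \/ tnth f' j = (tnth f j).+1).

(* prefix sum  sum_{i <= k} s_i  (0-based index k, i.e. the paper's k+1) *)
Definition prefix_sum (R : realType) (n : nat) (s : n.-tuple R) (k : 'I_n) : R :=
  \sum_(i < n | (i <= k)%N) tnth s i.

Definition sorts_noninc (n : nat) (f : n.-tuple nat) (sigma : 'S_n) : bool :=
  [forall i : 'I_n, forall j : 'I_n,
     (i <= j)%N ==> (tnth f (sigma j) <= tnth f (sigma i))%N].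

(* ||f||_{top-(k+1)} = sum_{i <= k} f_{sigma(i)} for a sorting permutation
   sigma (one always exists; the value does not depend on the choice). *)
Definition topk (n : nat) (f : n.-tuple nat) (k : 'I_n) : nat :=
  if [pick sigma : 'S_n | sorts_noninc f sigma] is Some sigma
  then \sum_(i < n | (i <= k)%N) tnth f (sigma i) else 0%N.

Definition sort_vec (R : realType) (n : nat) (f : n.-tuple nat) : n.-tuple R :=
  [tuple ((nth 0%N (sort geq f) i)%:R : R) | i < n].

(* Main.v *)
Require Import Defs.
From HB Require Import structures.
From mathcomp Require Import all_boot all_order all_algebra all_fingroup.
From mathcomp Require Import all_classical all_reals all_analysis.
From mathcomp Require Import zify.
Import Order.TTheory GRing.Theory Num.Theory.
Local Open Scope ring_scope.
Local Open Scope classical_set_scope.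

Lemma geq_tr : transitive geq. Proof. move=> x y z /= h1 h2; lia. Qed.
Lemma geq_to : total geq. Proof. move=> x y /=; exact: leq_total. Qed.
Lemma geq_an : antisymmetric geq. Proof. move=> x y /andP[/= h1 h2]; lia. Qed.

Lemma count_mono (v : nat) (s t : seq nat) : size s = size t ->
  (forall i, (nth 0 s i <= nth 0 t i)%N) ->
  (count (leq v) s <= count (leq v) t)%N.
Proof.
elim: s t => [|x s IH] [|y t] //= [Hs] H.
apply: leq_add; last by apply: IH => // i; exact: (H i.+1).
have := H 0%N => /= hxy.
case: (leqP v x) => // hvx; rewrite (leq_trans hvx hxy) //.
Qed.

Lemma sort_mono (s t : seq nat) : size s = size t ->
  (forall i, (nth 0 s i <= nth 0 t i)%N) ->
  forall i, (nth 0 (sort geq s) i <= nth 0 (sort geq t) i)%N.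
Proof.
move=> Hst H i.
set a := sort geq s; set b := sort geq t.
have sa : sorted geq a by apply: sort_sorted; exact: geq_to.
have sb : sorted geq b by apply: sort_sorted; exact: geq_to.
have za : size a = size s by rewrite size_sort.
have zb : size b = size s by rewrite size_sort Hst.
case: (ltnP i (size s)) => hi; last by rewrite nth_default ?za.
rewrite leqNgt; apply/negP => hba.
set v := nth 0 a i.
have c1 : (i.+1 <= count (leq v) a)%N.
  rewrite -(cat_take_drop i.+1 a) count_cat.
  apply: leq_trans (leq_addr _ _).
  have -> : count (leq v) (take i.+1 a) = size (take i.+1 a).
    apply/eqP; rewrite -all_count; apply/(all_nthP 0) => j hj.
    rewrite size_takel ?za // in hj.
    rewrite nth_take //.
    have := sorted_leq_nth geq_tr (fun x => leqnn x) 0 sa.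
    move=> /(_ j i); rewrite !inE za => /(_ (leq_trans hj hi) hi).
    by apply; rewrite -ltnS.
  by rewrite size_takel ?za.
have c2 : (count (leq v) b <= i)%N.
  rewrite -(cat_take_drop i b) count_cat.
  have -> : count (leq v) (drop i b) = 0%N.
    apply/eqP; rewrite -leqn0 leqNgt -has_count; apply/negP.
    move=> /(has_nthP 0) [j hj]; rewrite nth_drop /=.
    rewrite size_drop zb in hj.
    have := sorted_leq_nth geq_tr (fun x => leqnn x) 0 sb.
    move=> /(_ i (i + j)%N); rewrite !inE zb => /(_ hi).
    have hij : (i + j < size s)%N by lia.
    move=> /(_ hij (leq_addr _ _)) /= h1 h2.
    have : (v <= nth 0 b i)%N by exact: leq_trans h2 h1.
    by rewrite leqNgt hba.
  rewrite addn0; apply: leq_trans (count_size _ _) _.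
  by rewrite size_take; case: ifP => // /negbT; rewrite -leqNgt.
have := count_mono v s t Hst H.
rewrite -(count_sort geq (leq v) s) -/a -(count_sort geq (leq v) t) -/b => c3.
have := leq_trans c1 (leq_trans c3 c2); by rewrite ltnn.
Qed.
Lemma sum_nth_sort (n : nat) (f : n.-tuple nat) :
  (\sum_(i < n) nth 0 (sort geq f) i = \sum_(i < n) tnth f i)%N.
Proof.
have ps : perm_eq (sort geq f) f by rewrite perm_sort perm_refl.
transitivity (\sum_(x <- sort geq f) x)%N.
  by rewrite (big_nth 0) big_mkord size_sort size_tuple.
by rewrite (perm_big _ ps) big_tuple.
Qed.

Lemma nbr_step (R : realType) (n : nat) (f f' : n.-tuple nat) (j : 'I_n) :
  (forall i : 'I_n, i != j -> tnth f i = tnth f' i) ->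
  tnth f' j = (tnth f j).+1 ->
  \sum_(i < n) `|tnth (sort_vec R f) i - tnth (sort_vec R f') i| = 1.
Proof.
move=> Heq Hj.
have Hle : forall i, (nth 0 f i <= nth 0 f' i)%N.
  move=> i; case: (ltnP i n) => hi; last by rewrite !nth_default ?size_tuple.
  rewrite -!(tnth_nth 0 _ (Ordinal hi)).
  case: (eqVneq (Ordinal hi) j) => [->|/Heq ->]; by rewrite ?Hj.
have Hm := sort_mono f f' (etrans (size_tuple f) (esym (size_tuple f'))) Hle.
under eq_bigr => i _ do
  rewrite !tnth_mktuple distrC ger0_norm ?subr_ge0 ?ler_nat ?Hm // -natrB ?Hm //.
rewrite -natr_sum; apply/eqP; rewrite pnatr_eq1.
apply/eqP; apply: (@addIn (\sum_(i < n) nth 0 (sort geq f) i)%N).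
rewrite -big_split /=.
under eq_bigr => i _ do rewrite subnK ?Hm //.
rewrite !sum_nth_sort (bigD1 j) //= (bigD1 j (P := predT)) //= Hj.
rewrite add1n addSn; congr (_.+1)%N; congr (_ + _)%N.
by apply: eq_bigr => i hi; rewrite Heq.
Qed.

Lemma sortnbr (R : realType) (n : nat) (f f' : n.-tuple nat) :
  freq_nbr f f' -> prefix_nbr (sort_vec R f) (sort_vec R f').
Proof.
move=> [j [Heq [H|H]]]; rewrite /prefix_nbr.
  under eq_bigr => i _ do rewrite distrC.
  by rewrite (@nbr_step R n f' f j) // => i /Heq ->.
by rewrite (@nbr_step R n f f' j).
Qed.
Lemma topk_eq (n : nat) (f : n.-tuple nat) (k : 'I_n) :
  topk f k = (\sum_(i < n | (i <= k)%N) nth 0 (sort geq f) i)%N.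
Proof.
have ps : perm_eq (sort geq f) f by rewrite perm_sort perm_refl.
have ss : sorted geq (sort geq f) by apply: sort_sorted; exact: geq_to.
have zs : size (sort geq f) = n by rewrite size_sort size_tuple.
rewrite /topk; case: pickP => [sigma Hs | Hnone].
  set s1 := val [tuple tnth f (sigma i) | i < n].
  have nth1 : forall i : 'I_n, nth 0 s1 i = tnth f (sigma i).
    by move=> i; rewrite /s1 -tnth_nth tnth_mktuple.
  have p1 : perm_eq s1 (sort geq f).
    rewrite perm_sym perm_sort perm_sym; apply/tuple_permP; by exists sigma.
  have z1 : size s1 = n by rewrite /s1 size_tuple.
  have sr1 : sorted geq s1.
    rewrite sorted_pairwise; last exact: geq_tr.
    apply/(pairwiseP 0) => a b; rewrite !inE z1 => ha hb hab.
    rewrite (nth1 (Ordinal ha)) (nth1 (Ordinal hb)) /=.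
    by move/forallP: Hs => /(_ (Ordinal ha)) /forallP /(_ (Ordinal hb)) /implyP; apply; exact: ltnW.
  have e1 := sorted_eq geq_tr geq_an sr1 ss p1.
  by apply: eq_bigr => i _; rewrite -e1 nth1.
exfalso.
have [p Hp] := (tuple_permP ps).
have := Hnone p; rewrite /sorts_noninc => /negbT/negP; apply.
apply/forallP => i; apply/forallP => j; apply/implyP => hij.
have e : forall m : 'I_n, tnth f (p m) = nth 0 (sort geq f) m.
  by move=> m; rewrite Hp -tnth_nth tnth_mktuple.
rewrite !e.
have := sorted_leq_nth geq_tr (fun x => leqnn x) 0 ss.
by move=> /(_ i j); rewrite !inE zs; apply.
Qed.

Theorem mainTheorem16 (R : realType) (n : nat) (eps delta alpha p : R)
  (M : mechanism R (n.-tuple R) n) :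
  0 <= eps -> 0 <= delta -> 0 <= alpha -> 0 <= p <= 1 ->
  DP (@prefix_nbr R n) M eps delta ->
  (forall s : n.-tuple R,
     (p%:E <= M s [set a : n.-tuple R | forall k : 'I_n,
                              (`|tnth a k - prefix_sum s k| <= alpha)%R])%E) ->
  DP (@freq_nbr n) (fun f => M (sort_vec R f)) eps delta /\
  (forall f : n.-tuple nat,
     (p%:E <= M (sort_vec R f) [set a : n.-tuple R | forall k : 'I_n,
                              (`|tnth a k - (topk f k)%:R| <= alpha)%R])%E).
Proof.
move=> _ _ _ _ HDP Hacc; split.
  move=> x y hxy S mS; exact: HDP _ _ (sortnbr R n x y hxy) S mS.
move=> f.
have -> : [set a : n.-tuple R | forall k : 'I_n,
             (`|tnth a k - (topk f k)%:R| <= alpha)%R] =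
          [set a : n.-tuple R | forall k : 'I_n,
             (`|tnth a k - prefix_sum (sort_vec R f) k| <= alpha)%R].
  suff E : forall k, (topk f k)%:R = prefix_sum (sort_vec R f) k :> R.
    by apply/seteqP; split => a /= H k; [rewrite -E | rewrite E].
  move=> k; rewrite topk_eq natr_sum /prefix_sum.
  by apply: eq_bigr => i _; rewrite tnth_mktuple.
exact: Hacc.
Qed.
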